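(* Let $\varphi\colon (A,m,K)\to (B,n,L)$ be a local homomorphism of noetherian local rings and $I$ a proper ideal of $A$. Then $0\leq \delta_A(I)-\delta^\varphi_B(I)\leq \operatorname{rd}(\varphi)$.
   Context: All rings are commutative and noetherian with identity. A local homomorphism satisfies $\varphi(m)\subseteq n$; $K=A/m$, $L=B/n$. $\delta_A(I)=\dim_K\big((I+m^2)/m^2\big)$ and $\delta^\varphi_B(I)=\dim_L\big((IB+n^2)/n^2\big)$. The regularity defect $\operatorname{rd}(\varphi)$ is the $L$-dimension of the kernel of the natural $L$-linear map $m/m^2\otimes_K L\to n/n^2$, $\bar x\otimes\bar b\mapsto \overline{\varphi(x)b}$. *)

(* Defs.v *)
(* Ideals are represented as Prop-valued predicates on a
   commutative ring; quotient vector spaces over residue fields are handled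
   by unfolding K-linear (in)dependence of classes modulo an ideal. *)
From HB Require Import structures.
From mathcomp Require Import all_boot all_order all_algebra.
Set Implicit Arguments. Unset Strict Implicit. Unset Printing Implicit Defensive.
Import GRing.Theory.
Local Open Scope ring_scope.

Section Ideals.
Variable R : comNzRingType.

Definition is_ideal (I : R -> Prop) : Prop :=
  I 0 /\ (forall x y, I x -> I y -> I (x + y)) /\ (forall a x, I x -> I (a * x)).

Definition proper_ideal_p (I : R -> Prop) : Prop := is_ideal I /\ ~ I 1.

Definition maximal_ideal_p (M : R -> Prop) : Prop :=
  proper_ideal_p M /\
  forall J, is_ideal J -> (forall x, M x -> J x) ->
    (forall x, J x <-> M x) \/ J 1.

Definition local_ring (M : R -> Prop) : Prop :=
  maximal_ideal_p M /\ forall M', maximal_ideal_p M' -> forall x, M' x <-> M x.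

Definition noetherian : Prop :=
  forall J, is_ideal J -> exists n (g : 'I_n -> R),
    forall x, J x <-> exists c : 'I_n -> R, x = \sum_(i < n) c i * g i.

Definition sum_ideal (I J : R -> Prop) : R -> Prop :=
  fun x => exists a b, I a /\ J b /\ x = a + b.

Definition prod_ideal (I J : R -> Prop) : R -> Prop :=
  fun x => exists n (a b : 'I_n -> R),
    (forall i, I (a i) /\ J (b i)) /\ x = \sum_(i < n) a i * b i.

(* The classes mod N of the family x are linearly independent over the
   residue field R/M (the scalar action of the class of c on the class of
   x is the class of c * x). *)
Definition indep_mod (M N : R -> Prop) k (x : 'I_k -> R) : Prop :=
  forall c : 'I_k -> R, N (\sum_(j < k) c j * x j) -> forall j, M (c j).

(* The (R/M)-vector space S/N (N ⊆ S ideals, M N ⊆ N) has dimension d. *)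
Definition has_dim (M N S : R -> Prop) (d : nat) : Prop :=
  (exists x : 'I_d -> R, (forall j, S (x j)) /\ indep_mod M N x) /\
  (forall x : 'I_d.+1 -> R, (forall j, S (x j)) -> ~ indep_mod M N x).

End Ideals.

Definition ext_ideal (A B : comNzRingType) (phi : {rmorphism A -> B})
  (I : A -> Prop) : B -> Prop :=
  fun y => exists n (a : 'I_n -> A) (b : 'I_n -> B),
    (forall i, I (a i)) /\ y = \sum_(i < n) phi (a i) * b i.

Definition delta_is (A : comNzRingType) (mA I : A -> Prop) (d : nat) : Prop :=
  has_dim mA (prod_ideal mA mA) (sum_ideal I (prod_ideal mA mA)) d.

Definition delta_phi_is (A B : comNzRingType) (phi : {rmorphism A -> B})
  (mB : B -> Prop) (I : A -> Prop) (d : nat) : Prop :=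
  has_dim mB (prod_ideal mB mB) (sum_ideal (ext_ideal phi I) (prod_ideal mB mB)) d.

Definition cotangent_basis (A : comNzRingType) (mA : A -> Prop) e
  (x : 'I_e -> A) : Prop :=
  (forall i, mA (x i)) /\ indep_mod mA (prod_ideal mA mA) x /\
  (forall y, mA y -> exists c : 'I_e -> A,
      prod_ideal mA mA (y - \sum_(i < e) c i * x i)).

(* Via the basis x of m/m^2, m/m^2 ⊗_K L is identified with L^e, an element
   (ℓ_i) (represented by lifts v i ∈ B) corresponding to Σ x̄_i ⊗ ℓ_i, which
   the natural map sends to the class of Σ φ(x_i) v_i in n/n^2. *)
Definition in_rd_kernel (A B : comNzRingType) (phi : {rmorphism A -> B})
  (mB : B -> Prop) e (x : 'I_e -> A) (v : 'I_e -> B) : Prop :=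
  prod_ideal mB mB (\sum_(i < e) phi (x i) * v i).

Definition vec_indep (B : comNzRingType) (mB : B -> Prop) e k
  (V : 'I_k -> 'I_e -> B) : Prop :=
  forall c : 'I_k -> B,
    (forall i, mB (\sum_(j < k) c j * V j i)) -> forall j, mB (c j).

(* rd(phi) = dim_L of the kernel of m/m^2 ⊗_K L -> n/n^2 *)
Definition rd_is (A B : comNzRingType) (phi : {rmorphism A -> B})
  (mA : A -> Prop) (mB : B -> Prop) (r : nat) : Prop :=
  exists e (x : 'I_e -> A), cotangent_basis mA x /\
    (exists V : 'I_r -> 'I_e -> B,
        (forall j, in_rd_kernel phi mB x (V j)) /\ vec_indep mB V) /\
    (forall V : 'I_r.+1 -> 'I_e -> B,
        (forall j, in_rd_kernel phi mB x (V j)) -> ~ vec_indep mB V).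

(* Main.v *)
From HB Require Import structures.
From mathcomp Require Import all_boot all_order all_algebra.
From Stdlib Require Import ClassicalEpsilon Classical.
From mathcomp Require Import zify.
Require Import Defs.
Set Implicit Arguments. Unset Strict Implicit. Unset Printing Implicit Defensive.
Import GRing.Theory.
Local Open Scope ring_scope.

Definition ext (X : Type) n (u : 'I_n -> X) (x : X) : 'I_n.+1 -> X :=
  fun i => match unlift ord_max i with Some j => u j | None => x end.

Lemma ext_max X n (u : 'I_n -> X) x : ext u x ord_max = x.
Proof. by rewrite /ext unlift_none. Qed.

Lemma ext_widen X n (u : 'I_n -> X) x j : ext u x (widen_ord (leqnSn n) j) = u j.
Proof.
have -> : widen_ord (leqnSn n) j = lift ord_max j by apply: val_inj; rewrite /= /bump leqNgt ltn_ord.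
by rewrite /ext liftK.
Qed.

Lemma ord_S_case n (i : 'I_n.+1) : i = ord_max \/ exists j : 'I_n, i = widen_ord (leqnSn n) j.
Proof.
case: (unliftP ord_max i) => [j ->|->]; last by left.
by right; exists j; apply: val_inj; rewrite /= /bump leqNgt ltn_ord.
Qed.

Section LA.
Set Default Proof Using "All".
Variable R : comNzRingType.
Variable V : lmodType R.
Variable M : R -> Prop.
Variable N : V -> Prop.
Hypothesis hM0 : M 0.
Hypothesis hMD : forall x y, M x -> M y -> M (x + y).
Hypothesis hMM : forall a x, M x -> M (a * x).
Hypothesis hM1 : ~ M 1.
Hypothesis hinv : forall a, ~ M a -> exists b, M (b * a - 1).
Hypothesis hN0 : N 0.
Hypothesis hND : forall x y, N x -> N y -> N (x + y).
Hypothesis hNZ : forall (a : R) x, N x -> N (a *: x).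

Definition indep k (u : 'I_k -> V) :=
  forall c : 'I_k -> R, N (\sum_(j < k) c j *: u j) -> forall j, M (c j).
Definition inspan k (u : 'I_k -> V) v :=
  exists a : 'I_k -> R, N (v - \sum_(j < k) a j *: u j).

Lemma hNN x : N x -> N (- x).
Proof. by move=> Nx; rewrite -scaleN1r; apply: hNZ. Qed.
Lemma hNB x y : N x -> N y -> N (x - y).
Proof. by move=> Nx Ny; apply: hND => //; apply: hNN. Qed.
Lemma hNsub x y : N (x + y) -> N y -> N x.
Proof. by move=> Nxy Ny; have := hNB Nxy Ny; rewrite addrK. Qed.
Lemma hMN x : M x -> M (- x).
Proof. by move=> Mx; rewrite -mulN1r; apply: hMM. Qed.
Lemma hMsub x y : M (x + y) -> M y -> M x.
Proof. by move=> Mxy My; have := hMD Mxy (hMN My); rewrite addrK. Qed.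
Lemma hN_sum k (F : 'I_k -> V) : (forall i, N (F i)) -> N (\sum_(i < k) F i).
Proof. by move=> H; elim/big_ind: _ => //; apply: hND. Qed.
Lemma hM_sum k (F : 'I_k -> R) : (forall i, M (F i)) -> M (\sum_(i < k) F i).
Proof. by move=> H; elim/big_ind: _ => //; apply: hMD. Qed.

Lemma indep_ext k (u u' : 'I_k -> V) : (forall i, u i = u' i) -> indep u -> indep u'.
Proof.
move=> E H c Hc; apply: H; under eq_bigr => i _ do rewrite E; exact: Hc.
Qed.

Lemma indep_restr k (u : 'I_k.+1 -> V) : indep u -> indep (fun i => u (widen_ord (leqnSn k) i)).
Proof.
move=> H c Hc j.
have := H (ext c 0); rewrite big_ord_recr /= ext_max scale0r addr0.
under eq_bigr => i _ do rewrite ext_widen.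
by move=> /(_ Hc (widen_ord (leqnSn k) j)); rewrite ext_widen.
Qed.

Lemma indep_le (S : V -> Prop) d :
  (forall w : 'I_d.+1 -> V, (forall j, S (w j)) -> ~ indep w) ->
  forall k (w : 'I_k -> V), (forall j, S (w j)) -> indep w -> (k <= d)%N.
Proof.
move=> Hd; elim=> [//|k IH] w Sw Iw.
have := IH _ (fun j => Sw _) (indep_restr Iw).
rewrite leq_eqVlt => /orP [/eqP Ekd|//].
by subst d; case: (Hd w Sw Iw).
Qed.

Lemma inspan_add k (u : 'I_k -> V) v1 v2 : inspan u v1 -> inspan u v2 -> inspan u (v1 + v2).
Proof.
move=> [a Ha] [b Hb]; exists (fun j => a j + b j).
have -> : v1 + v2 - \sum_(j < k) (a j + b j) *: u j =
  (v1 - \sum_(j < k) a j *: u j) + (v2 - \sum_(j < k) b j *: u j).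
  rewrite (eq_bigr (fun j => a j *: u j + b j *: u j)); last by move=> j _; rewrite scalerDl.
  by rewrite big_split /= opprD addrACA.
exact: hND.
Qed.

Lemma inspan_scale k (u : 'I_k -> V) (c : R) v : inspan u v -> inspan u (c *: v).
Proof.
move=> [a Ha]; exists (fun j => c * a j).
have -> : c *: v - \sum_(j < k) (c * a j) *: u j = c *: (v - \sum_(j < k) a j *: u j).
  by rewrite scalerBr scaler_sumr; congr (_ - _); apply: eq_bigr => j _; rewrite scalerA.
exact: hNZ.
Qed.

Lemma inspan_N k (u : 'I_k -> V) v : N v -> inspan u v.
Proof.
move=> Nv; exists (fun _ => 0).
by rewrite big1 ?subr0 // => j _; rewrite scale0r.
Qed.

Lemma inspan_sum k (u : 'I_k -> V) n (F : 'I_n -> V) :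
  (forall i, inspan u (F i)) -> inspan u (\sum_(i < n) F i).
Proof.
move=> H; elim/big_ind: _ => //; first exact: inspan_N.
by move=> x y; apply: inspan_add.
Qed.

Lemma inspan_mem k (u : 'I_k -> V) j : inspan u (u j).
Proof.
exists (fun i => (i == j)%:R); rewrite (bigD1 j) //= eqxx scale1r big1 ?addr0 ?subrr //.
by move=> i /negbTE ->; rewrite scale0r.
Qed.

Lemma sum_delta k (w : 'I_k -> V) j : \sum_(i < k) (i == j)%:R *: w i = w j.
Proof.
rewrite (bigD1 j) //= eqxx scale1r big1 ?addr0 //.
by move=> i /negbTE ->; rewrite scale0r.
Qed.


Lemma span_of_dep (S : V -> Prop) (hMS : forall c v, M c -> S v -> N (c *: v))
  k (u : 'I_k -> V) s : indep u -> ~ indep (ext u s) -> S s -> inspan u s.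
Proof.
move=> Iu nI Ss.
have [c [Nc [j nMj]]] : exists c, N (\sum_(i < k.+1) c i *: ext u s i) /\ exists j, ~ M (c j).
  apply: NNPP => H; apply: nI => c Nc j; apply: NNPP => nM; apply: H.
  by exists c; split => //; exists j.
move: Nc; rewrite big_ord_recr /= ext_max.
under eq_bigr => i _ do rewrite ext_widen.
move=> Nc.
have nMmax : ~ M (c ord_max).
  move=> Mm; apply: nMj.
  have Hw := Iu _ (hNsub Nc (hMS _ _ Mm Ss)).
  by case: (ord_S_case j) => [->//|[j' ->]]; exact: Hw.
have [b Hb] := hinv nMmax.
exists (fun i => - (b * c (widen_ord (leqnSn k) i))).
set X := \sum_(i < k) c (widen_ord _ i) *: u i in Nc.
have -> : s - \sum_(j < k) - (b * c (widen_ord (leqnSn k) j)) *: u j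
    = b *: (X + c ord_max *: s) - (b * c ord_max - 1) *: s.
  rewrite (eq_bigr (fun j => - ((b * c (widen_ord (leqnSn k) j)) *: u j))); last first.
    by move=> i _; rewrite scaleNr.
  rewrite sumrN opprK scalerDr scalerBl scalerA scale1r opprB -addrA subrKC addrC /X.
  by rewrite scaler_sumr; congr (_ + _); apply: eq_bigr => i _; rewrite scalerA.
apply: hNB; first exact: hNZ.
exact: hMS.
Qed.

Lemma indep_ext_new (S : V -> Prop) (hMS : forall c v, M c -> S v -> N (c *: v))
  k (u : 'I_k -> V) s : indep u -> S s -> ~ inspan u s -> indep (ext u s).
Proof.
move=> Iu Ss nS; apply: NNPP => nI; apply: nS; exact: (span_of_dep hMS).
Qed.

Lemma steinitz (S : V -> Prop) (hMS : forall c v, M c -> S v -> N (c *: v)) n :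
  forall (u : 'I_n -> V), (forall i, S (u i)) -> forall k (w : 'I_k -> V),
  (forall j, inspan u (w j)) -> indep w -> (k <= n)%N.
Proof.
elim: n => [|n IH] u Su k w Sp Iw.
  case: k w Sp Iw => [//|k] w Sp Iw.
  have [a Ha] := Sp ord0; rewrite big_ord0 subr0 in Ha.
  have := Iw (fun i => (i == ord0)%:R); rewrite sum_delta => /(_ Ha ord0).
  by rewrite eqxx.
have [a Ha] := fin_all_exists Sp.
pose u' := fun i : 'I_n => u (widen_ord (leqnSn n) i).
have Hp : forall j, inspan u' (w j - a j ord_max *: u ord_max).
  move=> j; exists (fun i => a j (widen_ord (leqnSn n) i)).
  by move: (Ha j); rewrite big_ord_recr /= opprD addrA addrAC.
case: (classic (forall j, M (a j ord_max))) => [Hall|].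
  apply: leqW; apply: (IH u' (fun i => Su _) k w) => // j.
  have -> : w j = (w j - a j ord_max *: u ord_max) + a j ord_max *: u ord_max by rewrite subrK.
  by apply: inspan_add => //; apply: inspan_N; apply: hMS.
move/not_all_ex_not => [j0 nM0]; have [b Hb] := hinv nM0.
case: k w Sp Iw a Ha Hp j0 nM0 Hb => [|k] w Sp Iw a Ha Hp j0; first by case: j0.
move=> nM0 Hb.
pose al := fun j : 'I_k => a (lift j0 j) ord_max * b.
pose w' := fun j : 'I_k => w (lift j0 j) - al j *: w j0.
rewrite ltnS; apply: (IH u' (fun i => Su _) k w').
  move=> j.
  have -> : w' j = (w (lift j0 j) - a (lift j0 j) ord_max *: u ord_max)
      - al j *: (w j0 - a j0 ord_max *: u ord_max)
      + (a (lift j0 j) ord_max - al j * a j0 ord_max) *: u ord_max.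
    rewrite /w' scalerBr scalerA scalerBl opprB.
    by rewrite [RHS]addrAC subrKA subrKA.
  apply: inspan_add; first apply: inspan_add => //.
    by rewrite -scaleN1r; apply: inspan_scale; apply: inspan_scale.
  apply: inspan_N; apply: hMS => //.
  have -> : a (lift j0 j) ord_max - al j * a j0 ord_max
      = - (a (lift j0 j) ord_max * (b * a j0 ord_max - 1)).
    by rewrite /al mulrBr mulr1 opprB mulrA.
  by apply: hMN; apply: hMM.
move=> c' Hc' j.
pose c := fun i : 'I_k.+1 => match unlift j0 i with
  Some j => c' j | None => - \sum_(j < k) c' j * al j end.
have E : \sum_(i < k.+1) c i *: w i = \sum_(j < k) c' j *: w' j.
  rewrite (bigD1_ord j0) //= /c unlift_none.
  under eq_bigr => i _ do rewrite liftK.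
  rewrite /w'.
  under [RHS]eq_bigr => i _ do rewrite scalerBr scalerA.
  rewrite sumrB addrC; congr (_ + _).
  by rewrite scaleNr scaler_suml.
have := Iw c; rewrite E => /(_ Hc' (lift j0 j)).
by rewrite /c liftK.
Qed.

Lemma exists_max_nat (P : nat -> Prop) n :
  P 0%N -> (forall k, P k -> (k <= n)%N) -> exists d, P d /\ ~ P d.+1.
Proof.
move=> P0 Hb; apply: NNPP => H.
have : forall d, P d.
  by elim=> // d IH; apply: NNPP => nP; apply: H; exists d.
by move=> /(_ n.+1) /Hb; rewrite ltnn.
Qed.

Lemma dim_exists (S : V -> Prop) n :
  (forall k (w : 'I_k -> V), (forall j, S (w j)) -> indep w -> (k <= n)%N) ->
  exists d, (exists w : 'I_d -> V, (forall j, S (w j)) /\ indep w) /\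
    (forall w : 'I_d.+1 -> V, (forall j, S (w j)) -> ~ indep w).
Proof.
move=> Hb.
have [d [Pd nPd]] : exists d, (exists w : 'I_d -> V, (forall j, S (w j)) /\ indep w) /\
   ~ (exists w : 'I_d.+1 -> V, (forall j, S (w j)) /\ indep w).
  apply: (@exists_max_nat _ n).
  - by exists (fun _ => 0); split => [j|c _ j]; case: j.
  - by move=> k [w [Sw Iw]]; exact: Hb Sw Iw.
exists d; split => // w Sw Iw; apply: nPd; by exists w.
Qed.

Lemma extend_basis (S : V -> Prop) (hMS : forall c v, M c -> S v -> N (c *: v))
  n (g : 'I_n -> V) (Sg : forall i, S (g i)) (Sspan : forall v, S v -> inspan g v) :
  forall a (y : 'I_a -> V), (forall j, S (y j)) -> indep y ->
  exists e (h : (a <= e)%N) (x : 'I_e -> V), (forall j, S (x j)) /\ indep x /\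
    (forall j, x (widen_ord h j) = y j) /\ (forall v, S v -> inspan x v).
Proof.
suff : forall m a (y : 'I_a -> V), (n - a <= m)%N -> (forall j, S (y j)) -> indep y ->
  exists e (h : (a <= e)%N) (x : 'I_e -> V), (forall j, S (x j)) /\ indep x /\
    (forall j, x (widen_ord h j) = y j) /\ (forall v, S v -> inspan x v).
  by move=> H a y; apply: (H (n - a)%N).
elim=> [|m IH] a y Hm Sy Iy.
  case: (classic (forall v, S v -> inspan y v)) => [Hs|].
    exists a, (leqnn a), y; do 3! split => //.
    by move=> j; congr y; apply: val_inj.
  move=> /not_all_ex_not [v Hv]; have Sv := @not_imply_elim _ _ Hv; have nS := @not_imply_elim2 _ _ Hv; exfalso.
  have := indep_ext_new hMS Iy Sv nS.
  have Hsp : forall j, inspan g (ext y v j).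
    by move=> j; case: (ord_S_case j) => [->|[j' ->]]; rewrite ?ext_max ?ext_widen; apply: Sspan.
  move=> /(steinitz hMS Sg Hsp); lia.
case: (classic (forall v, S v -> inspan y v)) => [Hs|].
  exists a, (leqnn a), y; do 3! split => //.
  by move=> j; congr y; apply: val_inj.
move=> /not_all_ex_not [v Hv]; have Sv := @not_imply_elim _ _ Hv; have nS := @not_imply_elim2 _ _ Hv.
have Ie := indep_ext_new hMS Iy Sv nS.
have Se : forall j, S (ext y v j).
  by move=> j; case: (ord_S_case j) => [->|[j' ->]]; rewrite ?ext_max ?ext_widen.
have Hsp : forall j, inspan g (ext y v j) by move=> j; apply: Sspan.
have Hle := steinitz hMS Sg Hsp Ie.
have [e [h [x [Sx [Ix [Ex Spx]]]]]] := IH a.+1 (ext y v) ltac:(lia) Se Ie.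
have h' : (a <= e)%N := leq_trans (leqnSn a) h.
exists e, h', x; do 3! split => //.
move=> j; rewrite -(ext_widen y v j) -Ex; congr x; exact: val_inj.
Qed.

Lemma rank_nullity (S : V -> Prop) (hMS : forall c v, M c -> S v -> N (c *: v)) :
  forall k (w : 'I_k -> V), (forall j, S (w j)) ->
  exists s t, (s + t = k)%N /\ (exists f : 'I_s -> 'I_k, indep (fun i => w (f i))) /\
    exists Rl : 'I_t -> 'I_k -> R,
      (forall l, N (\sum_(j < k) Rl l j *: w j)) /\ vec_indep M Rl.
Proof.
elim=> [|k IH] w Sw.
  exists 0%N, 0%N; split => //; split; first by exists (fun i => i); move=> c _ j; case: j.
  by exists (fun _ _ => 0); split => [l|c _ l]; case: l.
pose w' := fun j : 'I_k => w (widen_ord (leqnSn k) j).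
have [s [t [Est [[f If] [Rl [NR IR]]]]]] := IH w' (fun j => Sw _).
case: (classic (indep (ext (fun i => w' (f i)) (w ord_max)))) => [Ie|nIe].
  exists s.+1, t; split; first by rewrite addSn Est.
  split.
    exists (ext (fun i => widen_ord (leqnSn k) (f i)) ord_max).
    apply: indep_ext Ie => i; case: (ord_S_case i) => [->|[i' ->]].
      by rewrite !ext_max.
    by rewrite !ext_widen.
  exists (fun l => ext (Rl l) 0); split.
    move=> l; rewrite big_ord_recr /= ext_max scale0r addr0.
    by under eq_bigr => i _ do rewrite ext_widen.
  move=> c Hc; apply: IR => i.
  by have := Hc (widen_ord (leqnSn k) i); under eq_bigr => l _ do rewrite ext_widen.
have [a Ha] := span_of_dep hMS If nIe (Sw _).
pose rho := ext (fun j : 'I_k => - \sum_(l < s) (if f l == j then a l else 0)) (1 : R).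
exists s, t.+1; split; first by rewrite addnS Est.
split; first by exists (fun i => widen_ord (leqnSn k) (f i)).
exists (ext (fun l => ext (Rl l) 0) rho); split.
  move=> l; case: (ord_S_case l) => [->|[l' ->]].
    rewrite ext_max /rho big_ord_recr /= ext_max scale1r.
    under eq_bigr => i _ do rewrite ext_widen.
    have -> : \sum_(i < k) (- \sum_(l0 < s) (if f l0 == i then a l0 else 0)) *: w (widen_ord (leqnSn k) i)
        = - \sum_(l0 < s) a l0 *: w' (f l0).
      rewrite (eq_bigr (fun i => - \sum_(l0 < s) (if f l0 == i then a l0 else 0) *: w' i)); last first.
        by move=> i _; rewrite scaleNr scaler_suml.
      rewrite sumrN exchange_big /=; congr (- _); apply: eq_bigr => l0 _.
      rewrite (bigD1 (f l0)) //= eqxx big1 ?addr0 // => i /negbTE.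
      by rewrite eq_sym => ->; rewrite scale0r.
    by rewrite addrC.
  rewrite ext_widen big_ord_recr /= ext_max scale0r addr0.
  by under eq_bigr => i _ do rewrite ext_widen.
move=> c Hc.
have Mt : M (c ord_max).
  have := Hc ord_max; rewrite big_ord_recr /= ext_max /rho ext_max mulr1.
  under eq_bigr => i _ do rewrite ext_widen ext_max mulr0.
  by rewrite big1_eq add0r.
have Hrest : forall l, M (c (widen_ord (leqnSn t) l)).
  apply: IR => i.
  have := Hc (widen_ord (leqnSn k) i); rewrite big_ord_recr /= ext_max.
  under eq_bigr => l _ do rewrite !ext_widen.
  by move=> H; apply: hMsub H _; rewrite mulrC; apply: hMM.
by move=> l; case: (ord_S_case l) => [->|[l' ->]].
Qed.

End LA.

Section RingFacts.
Variable R : comNzRingType.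

Lemma ideal_sum (J : R -> Prop) n (F : 'I_n -> R) : is_ideal J ->
  (forall i, J (F i)) -> J (\sum_(i < n) F i).
Proof. by move=> [J0 [JD JM]] H; elim/big_ind: _ => //. Qed.

Lemma ideal_opp (J : R -> Prop) x : is_ideal J -> J x -> J (- x).
Proof. by move=> [J0 [JD JM]] Jx; rewrite -mulN1r; apply: JM. Qed.

Lemma ideal_sub (J : R -> Prop) x y : is_ideal J -> J x -> J y -> J (x - y).
Proof. by move=> hJ Jx Jy; case: (hJ) => [_ [JD _]]; apply: JD => //; apply: ideal_opp. Qed.

Lemma ideal_gen_mem (J : R -> Prop) n (g : 'I_n -> R) :
  (forall x, J x <-> exists c : 'I_n -> R, x = \sum_(i < n) c i * g i) ->
  forall i, J (g i).
Proof.
move=> H i; apply/H; exists (fun j => (j == i)%:R).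
rewrite (bigD1 i) //= eqxx mul1r big1 ?addr0 // => j /negbTE ->; by rewrite mul0r.
Qed.

Lemma max_ideal_exists (noeth : noetherian R) (J : R -> Prop) :
  proper_ideal_p J -> exists M', maximal_ideal_p M' /\ forall x, J x -> M' x.
Proof.
move=> PJ; apply: NNPP => H.
pose P := fun K : R -> Prop => proper_ideal_p K /\ forall x, J x -> K x.
pose Q := fun (K K' : R -> Prop) => P K' /\ (forall x, K x -> K' x) /\ exists y, K' y /\ ~ K y.
have step : forall K, P K -> exists K', Q K K'.
  move=> K [PK JK]; apply: NNPP => nE; apply: H; exists K; split => //; split => //.
  move=> J' iJ' KJ'; case: (classic (J' 1)) => [J1|nJ1]; first by right.
  left => x; split => [J'x|]; last exact: KJ'.
  apply: NNPP => nKx; apply: nE; exists J'; split; last by split => //; exists x.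
  split; first by split.
  by move=> y /JK /KJ'.
pose next := fun K => epsilon (inhabits K) (Q K).
pose C := fun n => iter n next J.
have HC : forall n, P (C n) /\ Q (C n) (C n.+1).
  elim=> [|n [Pn Qn]].
    have P0 : P (C 0%N) by split.
    by split => //; apply: epsilon_spec; apply: step.
  have Pn1 : P (C n.+1) by case: Qn.
  by split => //; apply: epsilon_spec; apply: step.
have mono : forall i j, (i <= j)%N -> forall x, C i x -> C j x.
  move=> i j /subnK <-; elim: (j - i)%N => [//|d IH] x /IH.
  by case: (HC (d + i)%N) => _ [_ [Hs _]]; rewrite addSn; apply: Hs.
have iC : forall n, is_ideal (C n).
  by move=> n; have [[[iCn _] _] _] := HC n; exact iCn.
pose U := fun x => exists n, C n x.
have iU : is_ideal U.
  split; first by exists 0%N; case: PJ => [[]].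
  split.
    move=> x y [i Ci] [j Cj]; exists (maxn i j).
    case: (iC (maxn i j)) => [_ [D _]]; apply: D.
      by apply: mono Ci; exact: leq_maxl.
    by apply: mono Cj; exact: leq_maxr.
  move=> a x [i Ci]; exists i; case: (iC i) => [_ [_ Mu]]; exact: Mu.
have [m [g Hg]] := noeth U iU.
have Ug := ideal_gen_mem Hg.
have [nn Hn] := fin_all_exists Ug.
pose K := (\max_i nn i)%N.
have UK : forall x, U x -> C K x.
  move=> x /Hg [c ->]; apply: ideal_sum; first exact: iC.
  move=> i; case: (iC K) => [_ [_ Mu]]; apply: Mu.
  by apply: mono (Hn i); exact: leq_bigmax.
case: (HC K) => _ [_ [_ [y [Cy nCy]]]]; apply: nCy; apply: UK; by exists K.+1.
Qed.

Lemma inv_mod (M : R -> Prop) : maximal_ideal_p M ->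
  forall a, ~ M a -> exists b, M (b * a - 1).
Proof.
move=> [[iM nM1] HM] a nMa.
pose J := fun x => exists m r, M m /\ x = m + r * a.
have iJ : is_ideal J.
  case: (iM) => [M0 [MD MM]].
  split; first by exists 0, 0; rewrite mul0r addr0.
  split.
    move=> x y [m1 [r1 [M1 ->]]] [m2 [r2 [M2 ->]]]; exists (m1 + m2), (r1 + r2).
    by split; [apply: MD | rewrite mulrDl addrACA].
  move=> c x [m1 [r1 [M1 ->]]]; exists (c * m1), (c * r1).
  by split; [apply: MM | rewrite mulrDr mulrA].
case: (HM J iJ) => [x Mx|EJ|[m [r [Mm E]]]].
- by exists x, 0; rewrite mul0r addr0; split.
- by exfalso; apply: nMa; apply: (proj1 (EJ a)); exists 0, 1; split; [case: iM | rewrite add0r mul1r].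
- exists r; have -> : r * a - 1 = - m by rewrite E opprD addrCA subrr addr0.
  exact: ideal_opp.
Qed.

Lemma prod_ideal_is (M : R -> Prop) : is_ideal M -> is_ideal (prod_ideal M M).
Proof.
move=> iM; case: (iM) => [M0 [MD MM]].
split; first by exists 0%N, (fun _ => 0), (fun _ => 0); rewrite big_ord0.
split.
  move=> x y [n1 [a1 [b1 [H1 ->]]]] [n2 [a2 [b2 [H2 ->]]]].
  exists (n1 + n2)%N, (fun i => match split i with inl j => a1 j | inr j => a2 j end),
    (fun i => match split i with inl j => b1 j | inr j => b2 j end).
  split; first by move=> i; case: (split i).
  rewrite big_split_ord /=; congr (_ + _); apply: eq_bigr => i _.
    by rewrite (unsplitK (inl i)).
  by rewrite (unsplitK (inr i)).
move=> c x [n [a [b [H ->]]]]; exists n, (fun i => c * a i), b; split.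
  by move=> i; case: (H i) => ? ?; split => //; apply: MM.
by rewrite mulr_sumr; apply: eq_bigr => i _; rewrite mulrA.
Qed.

Lemma prod_ideal_sub (M : R -> Prop) x : is_ideal M -> prod_ideal M M x -> M x.
Proof.
move=> iM [n [a [b [H ->]]]]; apply: ideal_sum => // i.
by case: iM => [_ [_ MM]]; rewrite mulrC; apply: MM; case: (H i).
Qed.

Lemma prod_ideal_mul (M : R -> Prop) c v : M c -> M v -> prod_ideal M M (c * v).
Proof.
by move=> Mc Mv; exists 1%N, (fun _ => c), (fun _ => v); split => //; rewrite big_ord1.
Qed.

End RingFacts.

Theorem lemma2p4 (A B : comNzRingType) (mA : A -> Prop) (mB : B -> Prop)
  (phi : {rmorphism A -> B}) (I : A -> Prop)
  (noethA : noetherian A) (noethB : noetherian B)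
  (locA : local_ring mA) (locB : local_ring mB)
  (hloc : forall a, mA a -> mB (phi a))
  (hI : proper_ideal_p I) :
  exists dA dB r : nat,
    delta_is mA I dA /\ delta_phi_is phi mB I dB /\ rd_is phi mA mB r /\
    (dB <= dA)%N /\ (dA <= dB + r)%N.
Proof.
have mxA := locA.1. have mxB := locB.1.
have [[iA nA1] _] := mxA. have [[iB nB1] _] := mxB.
have invA := inv_mod mxA. have invB := inv_mod mxB.
have [A0 [AD AM]] := iA. have [B0 [BD BM]] := iB.
pose NA := prod_ideal mA mA. pose NB := prod_ideal mB mB.
have iNA : is_ideal NA := prod_ideal_is iA.
have iNB : is_ideal NB := prod_ideal_is iB.
have [NA0 [NAD NAM]] := iNA. have [NB0 [NBD NBM]] := iNB.
have hNZA : forall (a : A) (x : A^o), NA x -> NA (a *: x) := NAM.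
have hNZB : forall (a : B) (x : B^o), NB x -> NB (a *: x) := NBM.
have stA := @steinitz A A^o mA NA A0 AD AM nA1 invA NA0 NAD hNZA.
have spA := @span_of_dep A A^o mA NA A0 AD AM nA1 invA NA0 NAD hNZA.
have dimA := @dim_exists A A^o mA NA A0 AD AM nA1 invA NA0 NAD hNZA.
have extA := @extend_basis A A^o mA NA A0 AD AM nA1 invA NA0 NAD hNZA.
have stB := @steinitz B B^o mB NB B0 BD BM nB1 invB NB0 NBD hNZB.
have spB := @span_of_dep B B^o mB NB B0 BD BM nB1 invB NB0 NBD hNZB.
have dimB := @dim_exists B B^o mB NB B0 BD BM nB1 invB NB0 NBD hNZB.
have rnB := @rank_nullity B B^o mB NB B0 BD BM nB1 invB NB0 NBD hNZB.
have leB := @indep_le B B^o mB NB B0 BD BM nB1 invB NB0 NBD hNZB.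
have iaB := @inspan_add B B^o mB NB B0 BD BM nB1 invB NB0 NBD hNZB.
have isB := @inspan_scale B B^o mB NB B0 BD BM nB1 invB NB0 NBD hNZB.
have inB := @inspan_N B B^o mB NB B0 BD BM nB1 invB NB0 NBD hNZB.
have isumB := @inspan_sum B B^o mB NB B0 BD BM nB1 invB NB0 NBD hNZB.
have ImA : forall x, I x -> mA x.
  have [M' [mxM' IM']] := max_ideal_exists noethA hI.
  by move=> x /IM' /(proj1 (locA.2 M' mxM' x)).
have NAm : forall x, NA x -> mA x by move=> x Hx; exact: prod_ideal_sub iA Hx.
have NBm : forall x, NB x -> mB x by move=> x Hx; exact: prod_ideal_sub iB Hx.
pose SA := sum_ideal I NA.
have SAm : forall v, SA v -> mA v.
  by move=> v [a [b [Ia [Nb ->]]]]; apply: AD; [exact: ImA | exact: NAm].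
have hMSA : forall (c : A) (v : A^o), mA c -> mA v -> NA (c *: v).
  by move=> c v Mc Mv; exact: prod_ideal_mul.
have hMSB : forall (c : B) (v : B^o), mB c -> mB v -> NB (c *: v).
  by move=> c v Mc Mv; exact: prod_ideal_mul.
have [nI [h Hh]] := noethA I hI.1.
have Ih := ideal_gen_mem Hh.
have boundSA : forall k (w : 'I_k -> A^o), (forall j, SA (w j)) -> @indep A A^o mA NA k w -> (k <= nI)%N.
  move=> k w Sw Iw; apply: (stA mA hMSA nI h (fun i => ImA _ (Ih i)) k w _ Iw) => j.
  have [a [b [Ia [Nb E]]]] := Sw j; have [c Ec] := proj1 (Hh a) Ia.
  exists c; rewrite E.
  have -> : (\sum_(i < nI) c i *: (h i : A^o)) = a by rewrite Ec.
  by rewrite addrC addKr.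
have [dA [[y [Sy Iy]] noA]] := dimA SA nI boundSA.
have delA : delta_is mA I dA by split; [exists y | exact: noA].
have [nm [g Hg]] := noethA mA iA.
have mg := ideal_gen_mem Hg.
have spg : forall v, mA v -> @inspan A A^o NA nm g v.
  move=> v /Hg [c Ec]; exists c.
  have -> : (\sum_(i < nm) c i *: (g i : A^o)) = v by rewrite Ec.
  by rewrite subrr.
have [e [he [x [mx [Ix [Ex spx]]]]]] :=
  extA mA hMSA nm g mg spg dA y (fun j => SAm _ (Sy j)) Iy.
have cotx : cotangent_basis mA x by split => //; split.
have phiN : forall b, NA b -> NB (phi b).
  move=> b [n [a1 [b1 [H ->]]]]; exists n, (fun i => phi (a1 i)), (fun i => phi (b1 i)); split.
    by move=> i; case: (H i) => ? ?; split; apply: hloc.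
  by rewrite rmorph_sum; apply: eq_bigr => i _; rewrite rmorphM.
pose IB := ext_ideal phi I. pose SB := sum_ideal IB NB.
have IBm : forall v, IB v -> mB v.
  move=> v [n [a1 [b1 [H ->]]]]; apply: ideal_sum => // i.
  by rewrite mulrC; apply: BM; apply: hloc; apply: ImA.
have SBm : forall v, SB v -> mB v.
  by move=> v [a [b [Ia [Nb ->]]]]; apply: BD; [exact: IBm | exact: NBm].
pose w := fun j => (phi (y j) : B^o).
have Sw : forall j, SB (w j).
  move=> j; have [a [b [Ia [Nb E]]]] := Sy j; exists (phi a), (phi b); split; last split.
  - by exists 1%N, (fun _ => a), (fun _ => 1); split => //; rewrite big_ord1 mulr1.
  - exact: phiN.
  - by rewrite /w E rmorphD.
have SAext : forall a, I a -> forall j, SA (ext y a j).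
  move=> a Ia j; case: (ord_S_case j) => [->|[j' ->]]; rewrite ?ext_max ?ext_widen //.
  by exists a, 0; split => //; split => //; rewrite addr0.
have spanSB : forall v, SB v -> @inspan B B^o NB dA w v.
  move=> v [p [q [[n [a1 [b1 [H ->]]]] [Nq ->]]]].
  apply: iaB; last exact: inB.
  apply: isumB => i.
  have -> : phi (a1 i) * b1 i = b1 i *: (phi (a1 i) : B^o) by rewrite mulrC.
  apply: isB.
  have SAa : SA (a1 i) by exists (a1 i), 0; split => //; split => //; rewrite addr0.
  have nI' : ~ @indep A A^o mA NA dA.+1 (ext y (a1 i)) := noA _ (SAext _ (H i)).
  have [cc Hcc] := spA mA hMSA dA y (a1 i) Iy nI' (SAm _ SAa).
  exists (fun j => phi (cc j)); have := phiN _ Hcc.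
  rewrite rmorphB rmorph_sum.
  by under eq_bigr => j _ do rewrite rmorphM.
have boundSB : forall k (v : 'I_k -> B^o), (forall j, SB (v j)) ->
    @indep B B^o mB NB k v -> (k <= dA)%N.
  move=> k v Sv Iv.
  exact: (stB mB hMSB dA w (fun j => SBm _ (Sw j)) k v (fun j => spanSB _ (Sv j)) Iv).
have [dB [[yb [Syb Iyb]] noB]] := dimB SB dA boundSB.
have delB : delta_phi_is phi mB I dB by split; [exists yb | exact: noB].
have dBA : (dB <= dA)%N := boundSB _ _ Syb Iyb.
have [s [t [Est [[f If] [Rl [NRl IR]]]]]] := rnB mB hMSB dA w (fun j => SBm _ (Sw j)).
have sdB : (s <= dB)%N := leB SB dB noB s (fun i => w (f i)) (fun i => Sw _) If.
pose NR := fun v : 'rV[B]_e => forall i, mB (v 0 i).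
have NR0 : NR 0 by move=> i; rewrite mxE.
have NRD : forall u v, NR u -> NR v -> NR (u + v).
  by move=> u v Hu Hv i; rewrite mxE; apply: BD.
have NRZ : forall (a : B) v, NR v -> NR (a *: v).
  by move=> a v Hv i; rewrite mxE; apply: BM.
have stR := @steinitz B _ mB NR B0 BD BM nB1 invB NR0 NRD NRZ.
have dimR := @dim_exists B _ mB NR B0 BD BM nB1 invB NR0 NRD NRZ.
have leR := @indep_le B _ mB NR B0 BD BM nB1 invB NR0 NRD NRZ.
have ieR := @indep_ext B _ mB NR B0 BD BM nB1 invB NR0 NRD NRZ.
pose Ker := fun v : 'rV[B]_e => in_rd_kernel phi mB x (fun i => v 0 i).
have boundR : forall k (W : 'I_k -> 'rV[B]_e), (forall j, Ker (W j)) ->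
    indep mB NR W -> (k <= e)%N.
  move=> k W _ IW.
  have hMST : forall (c : B) (v : 'rV[B]_e), mB c -> True -> NR (c *: v).
    by move=> c v Mc _ i; rewrite mxE mulrC; apply: BM.
  apply: (stR (fun _ => True) hMST e (fun i => delta_mx 0 i) (fun _ => Logic.I) k W _ IW).
  move=> j; exists (fun i => W j 0 i); rewrite -row_sum_delta subrr; exact: NR0.
have [r [[Wr [KWr IWr]] noR]] := dimR Ker e boundR.
have vec_rows : forall k (Vf : 'I_k -> 'I_e -> B),
    vec_indep mB Vf <-> indep mB NR (fun j => \row_i Vf j i).
  move=> k Vf; split => H c Hc.
    apply: H => i; have := Hc i; rewrite summxE.
    by under eq_bigr => j _ do rewrite !mxE.
  apply: H => i; rewrite summxE; under eq_bigr => j _ do rewrite !mxE; exact: Hc.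
have Kerrow : forall Vf : 'I_e -> B, in_rd_kernel phi mB x Vf -> Ker (\row_i Vf i).
  move=> Vf KV; rewrite /Ker /in_rd_kernel.
  by under eq_bigr => i _ do rewrite mxE.
have rdr : rd_is phi mA mB r.
  exists e, x; split => //; split.
    exists (fun j i => Wr j 0 i); split; first by move=> j; exact: KWr.
    apply/vec_rows; apply: ieR IWr => j; apply/rowP => i; by rewrite mxE.
  move=> Vf KV /vec_rows IV; apply: (noR _ _ IV) => j.
  exact: Kerrow.
pose Vp := fun (l : 'I_t) (i : 'I_e) => oapp (Rl l) 0 (insub (val i) : option 'I_dA).
have Vpw : forall l j, Vp l (widen_ord he j) = Rl l j.
  move=> l j; rewrite /Vp.
  have -> : val (widen_ord he j) = val j by [].
  by rewrite valK.
have Vpo : forall l (i : 'I_e), ~~ (i < dA)%N -> Vp l i = 0.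
  by move=> l i Hi; rewrite /Vp insubF //; apply: negbTE.
have KVp : forall l, in_rd_kernel phi mB x (Vp l).
  move=> l; rewrite /in_rd_kernel (bigID (fun i : 'I_e => (i < dA)%N)) /=.
  rewrite [X in _ + X]big1; last by move=> i Hi; rewrite Vpo // mulr0.
  rewrite addr0 (big_ord_narrow he).
  under eq_bigr => j _ do rewrite Vpw Ex mulrC.
  exact: NRl.
have IVp : vec_indep mB Vp.
  move=> c Hc; apply: IR => j; have := Hc (widen_ord he j).
  by under eq_bigr => l _ do rewrite Vpw.
have trr : (t <= r)%N :=
  leR Ker r noR t (fun l => \row_i Vp l i) (fun l => Kerrow _ (KVp l)) (proj1 (vec_rows _ _) IVp).
exists dA, dB, r; do 4! split => //.
lia.
Qed.
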